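(* Assume the capacities satisfy (C1) and (C3). Let $G_N$ be the Poissonian random graph and $G_N'$ a random graph satisfying (A1) and (A2), both with capacities $\{\lambda_i\}$, coupled as described below, and let $\mathcal A_N=\big\{\sum_{i=1}^N K_i\mathbf 1\{\lambda_i>c_N\}=0\big\}$ with $c_N=N^{\xi}$. For each $\xi>0$ there exists a constant $\theta>0$ such that $\mathbb P(\mathcal A_N^c)=O(N^{-\theta})$.
   Context: Capacities $\lambda_1,\dots,\lambda_N>0$ deterministic, $l_N=\sum_i\lambda_i$, $\mu_N=\frac1N\sum_i\lambda_i$, $\nu_N=\sum_i\lambda_i^2/\sum_i\lambda_i$. (C1): there are $\mu\in(0,\infty)$, $\nu\in(1,\infty)$, $\alpha_1>0$ with $|\mu_N-\mu|=O(N^{-\alpha_1})$, $|\nu_N-\nu|=O(N^{-\alpha_1})$. (C3): there is $\tau>3$ such that for every $\varepsilon>0$ (with $\gamma:=\frac1{\tau-1}+\varepsilon<\frac12$), $\limsup_N\frac1N\sum_i\lambda_i^{\tau-1-\varepsilon}<\infty$ and $\max_i\lambda_i\le N^\gamma$. Poissonian random graph: the numbers of edges between distinct nodes $i,j$ are independent Poisson variables with mean $\lambda_i\lambda_j/l_N$; its connection indicator $X_{ij}=\mathbf 1\{\text{at least one edge}\}$ has $p_{ij}=1-e^{-\lambda_i\lambda_j/l_N}$. $G_N'$: edge indicators $X'_{ij}$ independent (A1) with $p'_{ij}=\mathbb P(X'_{ij}=1)=h(\lambda_i\lambda_j/l_N)$, $h:[0,\infty)\to[0,1]$, $h(x)-x=O(x^2)$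 as $x\downarrow0$ (A2). Coupling: independently over pairs $i<j$, with $\underline p_{ij}=\min\{p_{ij},p'_{ij}\}$, $\overline p_{ij}=\max\{p_{ij},p'_{ij}\}$, let $(\hat X_{ij},\hat X'_{ij},K_{ij})$ take values $(1,1,0),(1,0,1),(0,1,1),(0,0,0)$ with probabilities $\underline p_{ij}$, $p_{ij}-\underline p_{ij}$, $\overline p_{ij}-p_{ij}$, $1-\overline p_{ij}$ respectively; $\hat X_{ij}$ and $\hat X'_{ij}$ are used as the connection indicators of $G_N$ and $G_N'$, so $K_{ij}=\mathbf 1\{\hat X_{ij}\ne\hat X'_{ij}\}$ (a mismatch), $K_{ji}=K_{ij}$, and $K_i=\sum_{j\ne i}K_{ij}$. *)

(* Defs.v *)
From HB Require Import structures.
From mathcomp Require Import all_boot all_order all_algebra.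
From mathcomp Require Import all_classical all_reals all_analysis.
Set Implicit Arguments. Unset Strict Implicit. Unset Printing Implicit Defensive.
Import Order.TTheory GRing.Theory Num.Theory.
Local Open Scope ring_scope.

Section Coupling.
Variable R : realType.

(* unordered pairs {i,j} of distinct nodes, represented as i < j *)
Definition pairT (N : nat) := {x : 'I_N * 'I_N | (x.1 < x.2)%N}.

Definition lN (N : nat) (lam : 'I_N -> R) : R := \sum_(i < N) lam i.
Definition muN (N : nat) (lam : 'I_N -> R) : R := lN lam / N%:R.
Definition nuN (N : nat) (lam : 'I_N -> R) : R :=
  (\sum_(i < N) lam i ^+ 2) / lN lam.

Definition pP (N : nat) (lam : 'I_N -> R) (i j : 'I_N) : R :=
  1 - expR (- (lam i * lam j / lN lam)).
Definition pA (h : R -> R) (N : nat) (lam : 'I_N -> R) (i j : 'I_N) : R :=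
  h (lam i * lam j / lN lam).

(* Coupling outcome k : 'I_4 for a pair, encoding (Xhat, Xhat', K):
   0 -> (1,1,0), 1 -> (1,0,1), 2 -> (0,1,1), 3 -> (0,0,0) *)
Definition coup_weight (h : R -> R) (N : nat) (lam : 'I_N -> R)
  (i j : 'I_N) (k : 'I_4) : R :=
  let p := pP lam i j in
  let p' := pA h lam i j in
  let lo := Num.min p p' in
  let hi := Num.max p p' in
  match val k with
  | 0 => lo
  | 1 => p - lo
  | 2 => hi - p
  | _ => 1 - hi
  end.

(* configurations of the coupling, independently over pairs i<j *)
Definition config (N : nat) := {ffun pairT N -> 'I_4}.

Definition config_weight (h : R -> R) (N : nat) (lam : 'I_N -> R)
  (w : config N) : R :=
  \prod_(x : pairT N) coup_weight h lam (val x).1 (val x).2 (w x).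

Definition mismatch (k : 'I_4) : bool := (val k == 1%N) || (val k == 2%N).

(* K_ij (symmetric, 0 on the diagonal) *)
Definition Kij (N : nat) (w : config N) (i j : 'I_N) : nat :=
  match @insub _ _ (pairT N) (i, j), @insub _ _ (pairT N) (j, i) with
  | Some x, _ => mismatch (w x)
  | None, Some x => mismatch (w x)
  | None, None => 0%N
  end.

Definition Ki (N : nat) (w : config N) (i : 'I_N) : nat :=
  (\sum_(j < N | j != i) Kij w i j)%N.

Definition A_event (N : nat) (lam : 'I_N -> R) (c : R) (w : config N) : bool :=
  (\sum_(i < N) Ki w i * ((c < lam i)%R : bool))%N == 0%N.

Definition prob_Ac (h : R -> R) (N : nat) (lam : 'I_N -> R) (c : R) : R :=
  \sum_(w : config N) config_weight h lam w * (~~ A_event lam c w)%:R.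

End Coupling.

(* Main.v *)
Require Import Defs.
From HB Require Import structures.
From mathcomp Require Import all_boot all_order all_algebra.
From mathcomp Require Import all_classical all_reals all_analysis.
From mathcomp Require Import ring lra.
Import Order.TTheory GRing.Theory Num.Theory.
Import archimedean.Num.Theory.
Local Open Scope ring_scope.

Section Helpers.
Variable R : realType.

Lemma marginal N (F : pairT N -> 'I_4 -> R) (g : 'I_4 -> R) x0 :
  (forall x, \sum_k F x k = 1) ->
  \sum_(w : config N) (\prod_x F x (w x)) * g (w x0) = \sum_k F x0 k * g k.
Proof.
move=> H1.
transitivity (\sum_(w : config N)
   \prod_x (F x (w x) * (if x == x0 then g (w x) else 1))).
  apply: eq_bigr => w _; rewrite big_split /=; congr (_ * _).
  by rewrite (bigD1 x0) //= eqxx big1 ?mulr1 // => x /negbTE ->.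
rewrite -(bigA_distr_bigA (fun x k => F x k * (if x == x0 then g k else 1))) /= (bigD1 x0) //= [X in _ * X]big1 ?mulr1.
  by apply: eq_bigr => k _; rewrite eqxx.
move=> x /negbTE Hx; rewrite -[RHS](H1 x); apply: eq_bigr => k _; by rewrite Hx mulr1.
Qed.

Lemma Kij_pair N (i j : 'I_N) : i != j -> exists x : pairT N,
  (forall w, Kij w i j = mismatch (w x)) /\ (val x = (i, j) \/ val x = (j, i)).
Proof.
move=> Hij; rewrite /Kij.
case: insubP => [x _ Hv|Hn]; first by exists x; split => //; left.
case: insubP => [x _ Hv|Hn2]; first by exists x; split => //; right.
exfalso; move: Hn Hn2 Hij => /=; rewrite -!leqNgt => H1 H2.
by rewrite -val_eqE /= eqn_leq H1 H2.
Qed.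

Lemma weight_sum (h : R -> R) N (lam : 'I_N -> R) i j :
  \sum_k coup_weight h lam i j k = 1.
Proof. rewrite !big_ord_recr big_ord0 /= /coup_weight /=; lra. Qed.

Lemma weight_mis (h : R -> R) N (lam : 'I_N -> R) i j :
  \sum_k coup_weight h lam i j k * (mismatch k)%:R =
  `|pP lam i j - pA h lam i j|.
Proof.
rewrite !big_ord_recr big_ord0 /= /coup_weight /mismatch /=.
rewrite !mulr0 !mulr1 add0r addr0.
case: leP => H.
  by rewrite ler0_norm ?subr_le0 //; lra.
by rewrite gtr0_norm ?subr_gt0 //; lra.
Qed.

Lemma weight_ge0 (h : R -> R) N (lam : 'I_N -> R) i j k :
  0 <= pP lam i j <= 1 -> 0 <= pA h lam i j <= 1 ->
  0 <= coup_weight h lam i j k.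
Proof.
move=> /andP[p0 p1] /andP[q0 q1].
rewrite /coup_weight; case: k => [[|[|[|m]]] Hk] /=.
- by rewrite le_min p0 q0.
- by rewrite subr_ge0 ge_min lexx.
- by rewrite subr_ge0 le_max lexx.
- by rewrite subr_ge0 ge_max p1 q1.
Qed.

Lemma expN_bound (t : R) : 0 < t -> `|1 - expR (- t) - t| <= t ^+ 2.
Proof.
move=> t0.
have E1 := expR_ge1Dx (- t).
have E2 := expR_ge1Dx t.
have Ep := expR_gt0 t.
have E3 : expR (- t) <= 1 - t + t ^+ 2.
  rewrite expRN -[(expR t)^-1]mul1r ler_pdivrMr //.
  have : 0 < 1 - t + t ^+ 2 by nra.
  nra.
rewrite ler_norml; apply/andP; split; lra.
Qed.


Lemma pdiff_bound (h : R -> R) (Ch d t : R) :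
  (forall x : R, 0 <= x -> 0 <= h x <= 1) -> 0 < d ->
  (forall x : R, 0 < x -> x < d -> `|h x - x| <= Ch * x ^+ 2) ->
  0 < t -> `|(1 - expR (- t)) - h t| <= (1 + `|Ch| + d^-1 ^+ 2) * t ^+ 2.
Proof.
move=> H01 d0 HA t0.
have t2 : 0 <= t ^+ 2 by rewrite exprn_ge0 // ltW.
have dd : 0 <= d^-1 ^+ 2 by rewrite exprn_ge0 // invr_ge0 ltW.
have Ct : Ch * t ^+ 2 <= `|Ch| * t ^+ 2 by rewrite ler_wpM2r // ler_norm.
have Ht := @expN_bound t t0.
case: (ltP t d) => td.
  have Hh := HA t t0 td.
  have : `|(1 - expR (- t)) - h t| <= `|1 - expR (- t) - t| + `|h t - t|.
    by rewrite (distrC (h t)); apply: ler_distD.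
  have : 0 <= d^-1 ^+ 2 * t ^+ 2 by rewrite mulr_ge0.
  rewrite !mulrDl mul1r; lra.
have /andP[h0 h1] := H01 t (ltW t0).
have e0 : 0 <= expR (- t) <= 1 by rewrite expR_ge0 expR_le1 oppr_le0 ltW.
have H1 : 1 <= d^-1 ^+ 2 * t ^+ 2.
  rewrite -exprMn; apply: exprn_ege1.
  by rewrite -(mulVf (lt0r_neq0 d0)) ler_wpM2l // invr_ge0 ltW.
have : 0 <= (1 + `|Ch|) * t ^+ 2 by rewrite mulr_ge0 // addr_ge0.
move: e0 => /andP[e0 e1] H2; rewrite !mulrDl ler_norml; apply/andP; split; lra.
Qed.

Lemma pow_split (l c a : R) : 0 < c -> 2 < a -> 0 < l ->
  (nat_of_bool (c < l))%:R * l ^+ 2 <= c `^ (2 - a) * l `^ a.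
Proof.
move=> c0 a2 l0.
case cl: (c < l) => /=; last by rewrite mul0r mulr_ge0 // powR_ge0.
rewrite mul1r -powR_mulrn; last exact: ltW.
rewrite -[X in l `^ X](subrK a) powRD; last first.
  by rewrite (gt_eqF l0) implybT.
rewrite ler_wpM2r ?powR_ge0 //.
rewrite -opprB !powRN lef_pV2 ?posrE ?powR_gt0 //.
by apply: ge0_ler_powR; rewrite ?subr_ge0 ?nnegrE ?ltW.
Qed.


Lemma main_bound N (lam : 'I_N -> R) (h : R -> R) (Kc c a : R) :
  (forall i, 0 < lam i) -> 0 < lN lam ->
  (forall x, 0 <= x -> 0 <= h x <= 1) ->
  (forall t, 0 < t -> `|(1 - expR (- t)) - h t| <= Kc * t ^+ 2) ->
  0 <= Kc -> 0 < c -> 2 < a ->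
  prob_Ac h lam c <= Kc * nuN lam / lN lam * (c `^ (2 - a) * \sum_i lam i `^ a).
Proof.
move=> lpos l0 H01 Hb K0 c0 a2.
have tpos : forall i j, 0 < lam i * lam j / lN lam.
  by move=> i j; rewrite divr_gt0 // mulr_gt0.
have Wnn : forall w, 0 <= config_weight h lam w.
  move=> w; apply: prodr_ge0 => x _; apply: weight_ge0.
    have := tpos (val x).1 (val x).2; rewrite /pP; set t := _ / _ => tp.
    have e0 := expR_gt0 (- t).
    have e1 : expR (- t) <= 1 by rewrite expR_le1 oppr_le0 ltW.
    apply/andP; split; lra.
  by rewrite /pA; apply: H01; apply: ltW.
pose T := \sum_i \sum_j (nat_of_bool (c < lam i))%:R * (Kc * (lam i * lam j / lN lam) ^+ 2).
have SA : prob_Ac h lam c <= \sum_(w : config N) \sum_i \sum_(j | j != i)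
    config_weight h lam w * ((nat_of_bool (c < lam i))%:R * (Kij w i j)%:R).
  rewrite /prob_Ac; apply: ler_sum => w _.
  have -> : \sum_i \sum_(j | j != i)
    config_weight h lam w * ((nat_of_bool (c < lam i))%:R * (Kij w i j)%:R) =
    config_weight h lam w * \sum_i \sum_(j | j != i)
      ((nat_of_bool (c < lam i))%:R * (Kij w i j)%:R).
    by rewrite mulr_sumr; apply: eq_bigr => i _; rewrite mulr_sumr.
  apply: ler_wpM2l; first exact: Wnn.
  rewrite /A_event.
  set S := (\sum_i _)%N.
  have -> : \sum_i \sum_(j | j != i)
      ((nat_of_bool (c < lam i))%:R * (Kij w i j)%:R) = (S%:R : R).
    rewrite /S natr_sum; apply: eq_bigr => i _.
    by rewrite natrM mulrC /Ki natr_sum mulr_sumr.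
  by case: S => [|n] //=; rewrite ler1n.
have SB : forall i j, j != i ->
  \sum_(w : config N) config_weight h lam w *
     ((nat_of_bool (c < lam i))%:R * (Kij w i j)%:R) <=
  (nat_of_bool (c < lam i))%:R * (Kc * (lam i * lam j / lN lam) ^+ 2).
  move=> i j ji.
  have [x [HK Hx]] := @Kij_pair N i j (ltac:(by rewrite eq_sym)).
  have -> : \sum_(w : config N) config_weight h lam w *
     ((nat_of_bool (c < lam i))%:R * (Kij w i j)%:R) = ((nat_of_bool (c < lam i))%:R * \sum_(w : config N)
      (\prod_x' coup_weight h lam (val x').1 (val x').2 (w x')) *
      ((nat_of_bool (mismatch (w x)))%:R : R)).
    by rewrite mulr_sumr; apply: eq_bigr => w _; rewrite HK /config_weight mulrCA.
  rewrite (@marginal N (fun x' k => coup_weight h lam (val x').1 (val x').2 k)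
     (fun k => (nat_of_bool (mismatch k))%:R)); last first.
    by move=> x'; apply: weight_sum.
  rewrite weight_mis; apply: ler_wpM2l => //.
  have E : lam (val x).1 * lam (val x).2 = lam i * lam j.
    by case: Hx => -> //=; rewrite mulrC.
  rewrite /pP /pA E; exact: Hb _ (tpos i j).
have ST : prob_Ac h lam c <= T.
  apply: le_trans SA _; rewrite exchange_big /=; apply: ler_sum => i _.
  rewrite exchange_big /= [X in _ <= X](bigD1 i) //=.
  apply: ler_wpDl; first by rewrite mulr_ge0 // mulr_ge0 // exprn_ge0 // ltW.
  by apply: ler_sum => j ji; apply: SB.
apply: le_trans ST _.
have nu0 : 0 <= nuN lam.
  rewrite /nuN; apply: divr_ge0; last exact: ltW.
  by apply: sumr_ge0 => i _; rewrite exprn_ge0 // ltW.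
have -> : T = Kc * nuN lam / lN lam *
    \sum_i (nat_of_bool (c < lam i))%:R * lam i ^+ 2.
  rewrite /T /nuN mulr_sumr; apply: eq_bigr => i _.
  transitivity (\sum_j (Kc / lN lam / lN lam * ((nat_of_bool (c < lam i))%:R * lam i ^+ 2)) * lam j ^+ 2).
    by apply: eq_bigr => j _; ring.
  rewrite -mulr_sumr; ring.
apply: ler_wpM2l.
  by apply: mulr_ge0; [exact: mulr_ge0 | rewrite invr_ge0; exact: ltW].
rewrite mulr_sumr; apply: ler_sum => i _; exact: pow_split.
Qed.


End Helpers.

Theorem lemma2p1 (R : realType) (lam : forall N : nat, 'I_N -> R)
  (h : R -> R) :
  (* capacities positive *)
  (forall N (i : 'I_N), 0 < lam N i) ->
  (* (C1) *)
  (exists (mu nu alpha1 : R), 0 < mu /\ 1 < nu /\ 0 < alpha1 /\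
     exists (C : R) (N0 : nat), forall N : nat, (N0 <= N)%N ->
       `|muN (lam N) - mu| <= C * (N%:R `^ (- alpha1)) /\
       `|nuN (lam N) - nu| <= C * (N%:R `^ (- alpha1))) ->
  (* (C3) *)
  (exists tau : R, 3 < tau /\
     forall eps : R, 0 < eps -> (tau - 1)^-1 + eps < 2^-1 ->
       (exists (B : R) (N0 : nat), forall N : nat, (N0 <= N)%N ->
          N%:R^-1 * (\sum_(i < N) lam N i `^ (tau - 1 - eps)) <= B) /\
       (forall (N : nat) (i : 'I_N),
          lam N i <= N%:R `^ ((tau - 1)^-1 + eps))) ->
  (* (A2): h : [0,oo) -> [0,1] and h(x) - x = O(x^2) as x decreases to 0 *)
  (forall x : R, 0 <= x -> 0 <= h x <= 1) ->
  (exists (C delta : R), 0 < delta /\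
     forall x : R, 0 < x -> x < delta -> `|h x - x| <= C * x ^+ 2) ->
  forall xi : R, 0 < xi ->
  exists theta : R, 0 < theta /\
    exists (C : R) (N0 : nat), forall N : nat, (N0 <= N)%N ->
      prob_Ac h (lam N) (N%:R `^ xi) <= C * (N%:R `^ (- theta)).
Proof.
move=> lpos [mu [nu [al [mu0 [nu1 [al0 [Cm [N1 HC1]]]]]]]] [tau [tau3 HC3]]
  H01 [Ch [d [d0 HA]]] xi xi0.
set u := (tau - 1)^-1.
have u0 : 0 < u by rewrite invr_gt0; lra.
have uu : u * (tau - 1) = 1 by rewrite mulVf //; apply: lt0r_neq0; lra.
have u2 : u < 2^-1.
  rewrite /u ltf_pV2 ?posrE; lra.
set eps := (2^-1 - u) / 2.
have e0 : 0 < eps by rewrite /eps; lra.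
have eu : u + eps < 2^-1 by rewrite /eps; lra.
have ea : 2 < tau - 1 - eps by rewrite /eps; nra.
have [[B [N2 HB]] _] := HC3 eps e0 eu.
set a := tau - 1 - eps.
set Kc := 1 + `|Ch| + d^-1 ^+ 2.
have K0 : 0 <= Kc by rewrite /Kc !addr_ge0 // exprn_ge0 // invr_ge0 ltW.
have Hb : forall t, 0 < t -> `|(1 - expR (- t)) - h t| <= Kc * t ^+ 2.
  by move=> t; exact: (@pdiff_bound R h Ch d t H01 d0 HA).
set M := 2 * `|Cm| / mu + 1.
have M0 : 0 < M.
  have : 0 <= 2 * `|Cm| / mu.
    by apply: divr_ge0; [exact: mulr_ge0 | exact: ltW].
  rewrite /M; lra.
set N3 := (Num.truncn (M `^ al^-1)).+1.
exists (xi * (a - 2)); split; first by rewrite mulr_gt0 // subr_gt0.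
exists (Kc * (nu + `|Cm|) * (2 / mu) * B), (maxn N1 (maxn N2 (maxn N3 1))).
move=> N; rewrite !geq_max => /and4P[hN1 hN2 hN3 hN].
have Np : 0 < N%:R :> R by rewrite ltr0n.
have Nal1 : 1 <= N%:R `^ al.
  have := @ler_powR R N%:R _ 0 al; rewrite powRr0; apply; last exact: ltW.
  by rewrite ler1n.
have Nal0 : 0 < N%:R `^ (- al) by rewrite powR_gt0.
have Nal2 : N%:R `^ (- al) <= 1 by rewrite powRN invf_le1 // (lt_le_trans ltr01).
have [HCm HCn] := HC1 N hN1.
have CmN : Cm * N%:R `^ (- al) <= `|Cm| * N%:R `^ (- al).
  by apply: ler_wpM2r; [exact: ltW | exact: ler_norm].
have h1 : nuN (lam N) <= nu + `|Cm|.
  have : `|Cm| * N%:R `^ (- al) <= `|Cm| by rewrite ler_piMr.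
  move: HCn; rewrite ler_norml => /andP[_ ?]; lra.
have MN : M <= N%:R `^ al.
  have hM : M `^ al^-1 < N%:R.
    apply: lt_le_trans (truncnS_gt _) _.
    by rewrite ler_nat.
  have : (M `^ al^-1) `^ al <= N%:R `^ al.
    apply: ge0_ler_powR; [exact: ltW | by rewrite nnegrE powR_ge0 | by rewrite nnegrE ler0n | exact: ltW].
  rewrite -powRrM mulVf ?powRr1 //; [exact: ltW | exact: lt0r_neq0].
have h2' : Cm * N%:R `^ (- al) <= mu / 2.
  have : N%:R `^ (- al) <= M^-1.
    by rewrite powRN lef_pV2 ?posrE ?powR_gt0.
  move=> HNM.
  have : `|Cm| * N%:R `^ (- al) <= `|Cm| * M^-1.
    by apply: ler_wpM2l => //.
  have : `|Cm| * M^-1 <= mu / 2.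
    rewrite ler_pdivrMr //.
    have -> : mu / 2 * M = `|Cm| + mu / 2.
      rewrite /M; field; exact: lt0r_neq0.
    lra.
  lra.
have muN2 : mu / 2 <= muN (lam N).
  move: HCm; rewrite ler_norml => /andP[? _]; lra.
have lNe : lN (lam N) = muN (lam N) * N%:R.
  by rewrite /muN divfK // lt0r_neq0.
have l0 : 0 < lN (lam N).
  rewrite lNe mulr_gt0 //; lra.
have h2 : (lN (lam N))^-1 <= 2 / mu * N%:R^-1.
  rewrite lNe invfM ler_wpM2r ?invr_ge0 ?ler0n //.
  rewrite -invf_div lef_pV2 // posrE; [lra | exact: divr_gt0].
have h3 : \sum_i lam N i `^ a <= N%:R * B.
  by rewrite -ler_pdivrMl //; apply: HB.
have c0 : 0 < N%:R `^ xi by apply: powR_gt0.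
have h4 : (N%:R `^ xi) `^ (2 - a) = N%:R `^ (- (xi * (a - 2))).
  by rewrite -powRrM; congr (_ `^ _); ring.
apply: le_trans (@main_bound R N (lam N) h Kc (N%:R `^ xi) a (lpos N) l0 H01 Hb K0 c0 ea) _.
rewrite h4.
set X := N%:R `^ (- (xi * (a - 2))).
have X0 : 0 <= X by apply: powR_ge0.
have nu0 : 0 <= nuN (lam N).
  rewrite /nuN; apply: divr_ge0; last exact: ltW.
  by apply: sumr_ge0 => i _; rewrite exprn_ge0 // ltW.
have S0 : 0 <= \sum_i lam N i `^ a by apply: sumr_ge0 => i _; apply: powR_ge0.
have H : Kc * nuN (lam N) / lN (lam N) * (X * \sum_i lam N i `^ a) <=
   Kc * (nu + `|Cm|) * (2 / mu * N%:R^-1) * (X * (N%:R * B)).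
  apply: ler_pM.
  - by apply: mulr_ge0; [exact: mulr_ge0 | rewrite invr_ge0; exact: ltW].
  - exact: mulr_ge0.
  - apply: ler_pM => //.
    + exact: mulr_ge0.
    + by rewrite invr_ge0; exact: ltW.
    + exact: ler_wpM2l.
  - exact: ler_wpM2l.
suff E : Kc * (nu + `|Cm|) * (2 / mu * N%:R^-1) * (X * (N%:R * B)) =
  Kc * (nu + `|Cm|) * (2 / mu) * B * X by rewrite -E.
field; apply/andP; split; apply: lt0r_neq0 => //.
Qed.
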